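(* Let $t$ be odd with $1\le t\le k-1$, let $N$ be a positive multiple of $2^t$, $\lambda=N/2^t$, and let $p_{\max}$ be an integer with $\lambda/2^{k-t}<p_{\max}\le\lambda$. Then none of $R_1,\dots,R_k$ belongs to $G(k,2,t)^{\rm LP}$.
   Context: Variables $x_z$ are indexed by $z\in\{-1,1\}^k$. The LP relaxation of ILP (OA) for $s=2$ is: minimize $\sum_zx_z$ s.t. for each $t$-subset $J\subseteq\{1,\dots,k\}$ and each $u\in\{-1,1\}^J$, $\sum_{z:\ z_j=u_j\ \forall j\in J}x_z=\lambda$, and $0\le x_z\le p_{\max}$. With feasible set $\mathcal F$, $G(k,2,t)^{\rm LP}$ is the set of permutations $\pi$ of $\{-1,1\}^k$ with $\pi(x)\in\mathcal F$ and equal objective value for all $x\in\mathcal F$, where $\pi(x)_{\pi(z)}=x_z$. For $i\in\{1,\dots,k\}$, $R_i$ is the permutation of $\{-1,1\}^k$ given by $R_i(z_1,\dots,z_k)=(z_1z_i,\dots,z_{i-1}z_i,z_i,z_{i+1}z_i,\dots,z_kz_i)$. *)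

(* Defs.v *)
From HB Require Import structures.
From mathcomp Require Import all_boot all_order all_algebra all_fingroup.
From mathcomp Require Import reals.
Set Implicit Arguments. Unset Strict Implicit. Unset Printing Implicit Defensive.
Import Order.TTheory GRing.Theory Num.Theory.
Local Open Scope ring_scope.

(* Points of {-1,1}^k.  ENCODING: a sign is represented by a boolean,
   [false] <-> +1 and [true] <-> -1, i.e. the sign of b is (-1)^b = sgn b.
   Under this encoding the product of signs is [xorb]. *)
Definition pt (k : nat) := {ffun 'I_k -> bool}.

Definition sgn (b : bool) : int := if b then -1 else 1.

Lemma sgn_xor (a b : bool) : sgn (xorb a b) = sgn a * sgn b.
Proof. by case: a; case: b. Qed.

(* Feasible set F of the LP relaxation of (OA) for s = 2 with parameters
   t, lambda, p_max.  A vector u in {-1,1}^J is represented by a total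
   function on 'I_k whose values outside J are irrelevant. *)
Definition feasible (R : realType) (k t lam : nat) (pmax : int)
    (x : pt k -> R) : Prop :=
  (forall J : {set 'I_k}, #|J| = t ->
     forall u : pt k,
       \sum_(z : pt k | [forall j in J, z j == u j]) x z = lam%:R)
  /\ (forall z : pt k, 0 <= x z <= pmax%:~R).

Definition objective (R : realType) (k : nat) (x : pt k -> R) : R :=
  \sum_(z : pt k) x z.

Definition permute (R : realType) (k : nat) (pi : {perm pt k}) (x : pt k -> R)
  : pt k -> R := fun z => x ((pi^-1)%g z).

Definition inGLP (R : realType) (k t lam : nat) (pmax : int)
    (pi : {perm pt k}) : Prop :=
  forall x : pt k -> R, @feasible R k t lam pmax x ->
    @feasible R k t lam pmax (permute pi x) /\
    objective (permute pi x) = objective x.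

Definition Rfun (k : nat) (i : 'I_k) (z : pt k) : pt k :=
  [ffun j => if j == i then z i else xorb (z j) (z i)].

Lemma RfunK (k : nat) (i : 'I_k) : involutive (@Rfun k i).
Proof.
move=> z; apply/ffunP=> j; rewrite /Rfun !ffunE eqxx.
by case: eqP => [-> //| _]; case: (z j); case: (z i).
Qed.

Definition Rperm (k : nat) (i : 'I_k) : {perm pt k} :=
  perm (inv_inj (@RfunK k i)).

Lemma RpermE (k : nat) (i : 'I_k) (z : pt k) (j : 'I_k) :
  sgn (Rperm i z j) = if j == i then sgn (z i) else sgn (z j) * sgn (z i).
Proof. by rewrite permE ffunE; case: eqP => // _; rewrite sgn_xor. Qed.

(* Main.v *)
Require Import Defs.
From HB Require Import structures.
From mathcomp Require Import all_boot all_order all_algebra all_fingroup.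
From mathcomp Require Import reals.
From mathcomp Require Import lra.
Import Order.TTheory GRing.Theory Num.Theory.
Local Open Scope ring_scope.

Lemma exists_sub (T : finType) (A : {set T}) n : (n <= #|A|)%N ->
  exists B : {set T}, B \subset A /\ #|B| = n.
Proof.
elim: n => [|n IH] Hn; first by exists set0; rewrite sub0set cards0.
have [B [BA cB]] := IH (ltnW Hn).
have : (0 < #|A :\: B|)%N by rewrite cardsD (setIidPr BA) cB subn_gt0.
case/card_gt0P => x; rewrite in_setD => /andP[xB xA].
exists (x |: B); rewrite subUset sub1set xA BA cardsU1 xB cB; split => //.
Qed.

Section H.
Variables (R : realType) (k : nat).
Definition sg (b : bool) : R := if b then -1 else 1.
Definition chi (S : {set 'I_k}) (z : pt k) : R :=
  \prod_j (if j \in S then sg (z j) else 1).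
Definition ind (J : {set 'I_k}) (u : pt k) (z : pt k) : R :=
  \prod_j (if j \in J then ((z j == u j) : nat)%:R else 1).

Lemma indE J u z : ind J u z = ([forall j in J, z j == u j] : nat)%:R.
Proof.
rewrite /ind; case: forallP => H.
  by apply: big1 => j _; case: ifP => // jJ; have := H j; rewrite jJ /= => ->.
move/forallP: H; rewrite negb_forall => /existsP[j]; rewrite negb_imply.
case/andP => jJ nj; rewrite (bigD1 j) //= jJ (negbTE nj) mul0r //.
Qed.

Lemma sum_cond (J : {set 'I_k}) (u : pt k) (F : pt k -> R) :
  \sum_(z : pt k | [forall j in J, z j == u j]) F z = \sum_z ind J u z * F z.
Proof.
rewrite big_mkcond; apply: eq_bigr => z _; rewrite indE.
by case: ifP => _; rewrite ?mul1r ?mul0r.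
Qed.

Lemma sum_ind (J : {set 'I_k}) (u : pt k) : \sum_z ind J u z = 2 ^+ #|~: J|.
Proof.
rewrite /ind.
rewrite -(bigA_distr_bigA (fun j (b : bool) => if j \in J then ((b == u j) : nat)%:R else (1 : R))) /=.
rewrite (eq_bigr (fun j => if j \in ~: J then 2 else 1)); last first.
  move=> j _; rewrite big_bool /= inE; case: (j \in J) => //=.
  by case: (u j); rewrite /= ?add0r ?addr0.
by rewrite -big_mkcond /= prodr_const.
Qed.

Lemma sum_ind_chi (J : {set 'I_k}) (u : pt k) (S : {set 'I_k}) : ~~ (S \subset J) -> \sum_z ind J u z * chi S z = 0.
Proof.
move=> nSJ.
have -> : \sum_z ind J u z * chi S z = \sum_(z : pt k) \prod_j
   ((if j \in J then ((z j == u j) : nat)%:R else 1) * (if j \in S then sg (z j) else 1)).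
  by apply: eq_bigr => z _; rewrite /ind /chi -big_split.
rewrite -(bigA_distr_bigA (fun j (b : bool) => (if j \in J then ((b == u j) : nat)%:R else (1 : R)) * (if j \in S then sg b else 1))) /=.
have [j /andP[jS jJ]] : exists j, (j \in S) && (j \notin J).
  by move/subsetPn: nSJ => [j jS jJ]; exists j; rewrite jS jJ.
rewrite (bigD1 j) //= big_bool /= jS (negbTE jJ) /sg.
rewrite !mul1r.
by rewrite addNr mul0r.
Qed.

Lemma chi_pm S z : chi S z = 1 \/ chi S z = -1.
Proof.
rewrite /chi; apply: (big_ind (fun r : R => r = 1 \/ r = -1)).
- by left.
- by move=> x y [->|->] [->|->]; rewrite ?mulr1 ?mulrN1 ?opprK; auto.
- by move=> j _; case: ifP => _; [case: (z j); rewrite /sg; auto | left].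
Qed.
End H.
Arguments sg {R}.
Arguments chi {R k}.
Arguments ind {R k}.
Lemma RpermV (k : nat) (i : 'I_k) : ((Rperm i)^-1)%g = Rperm i.
Proof.
apply/permP => z; apply: (@perm_inj _ (Rperm i)).
by rewrite permKV !permE RfunK.
Qed.

Theorem lemma10 (R : realType) (k t N : nat) (pmax : int) :
  odd t -> (1 <= t)%N -> (t <= k - 1)%N ->
  (0 < N)%N -> (2 ^ t %| N)%N ->
  let lam := (N %/ 2 ^ t)%N in
  (lam%:R / (2 ^ (k - t))%:R : R) < pmax%:~R ->
  pmax <= lam%:Z ->
  forall i : 'I_k, ~ @inGLP R k t lam pmax (Rperm i).
Proof.
move=> odd_t t1 tk N0 dvd lam Hlt Hle i Hin.
have [J [JC cJ]] : exists J : {set 'I_k}, J \subset [set~ i] /\ #|J| = t.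
  by apply: (@exists_sub _ [set~ i] t); rewrite cardsC1 card_ord -subn1.
have iJ : i \notin J by apply/negP => /(subsetP JC); rewrite !inE eqxx.
pose S := i |: J.
have cS : #|S| = t.+1 by rewrite cardsU1 iJ cJ.
have cCJ : forall J' : {set 'I_k}, #|J'| = t -> #|~: J'| = (k - t)%N.
  by move=> J' cJ'; rewrite cardsCs setCK card_ord cJ'.
have lam0 : (0 < lam)%N by rewrite divn_gt0 ?expn_gt0 // dvdn_leq.
set a : R := lam%:R / (2 ^ (k - t))%:R in Hlt.
set p : R := pmax%:~R in Hlt.
have two0 : (2 ^ (k - t))%:R != 0 :> R by rewrite pnatr_eq0 expn_eq0.
have a0 : 0 < a by rewrite divr_gt0 // ?ltr0n // expn_gt0.
have aE : a * 2 ^+ (k - t) = lam%:R.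
  by rewrite /a -natrX mulfVK.
pose e : R := Num.min a (p - a).
have e0 : 0 < e by rewrite lt_min a0 subr_gt0.
have ea : e <= a by rewrite ge_min lexx.
have epa : e <= p - a by rewrite ge_min lexx orbT.
pose x : pt k -> R := fun z => a + e * chi S z.
have feas : feasible t lam pmax x.
  split.
    move=> J' cJ' u; rewrite sum_cond.
    rewrite (eq_bigr (fun z => ind J' u z * a + e * (ind J' u z * chi S z))); last first.
      by move=> z _; rewrite /x mulrDr [ind _ _ _ * (e * _)]mulrCA.
    rewrite big_split /= -mulr_suml -mulr_sumr sum_ind sum_ind_chi; last first.
      by apply/negP => /subset_leq_card; rewrite cS cJ' ltnn.
    by rewrite mulr0 addr0 cCJ // mulrC aE.
  move=> z; rewrite /x; case: (chi_pm R k S z) => ->; apply/andP; split; rewrite -/p; lra.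
have [feas2 _] := Hin x feas.
have := (feas2.1 J cJ [ffun=> false]).
rewrite /permute RpermV.
rewrite (eq_bigr (fun _ => a + e)); last first.
  move=> w /forallP Hw; rewrite /x; suff -> : @chi R k S (Rperm i w) = 1 by rewrite mulr1.
  rewrite /chi -big_mkcond /= big_setU1 //= !permE !ffunE eqxx.
  rewrite (eq_bigr (fun _ => sg (w i))); last first.
    move=> j jJ; rewrite /Rfun ffunE.
    have := Hw j; rewrite jJ ffunE /= => /eqP ->.
    by have -> : (j == i) = false by apply/negbTE; apply: contra iJ => /eqP <-.
  rewrite prodr_const cJ -exprS /sg; case: (w i); first by rewrite -signr_odd /= odd_t.
  by rewrite expr1n.
rewrite (sum_cond R k J [ffun=> false] (fun _ => a + e)) -mulr_suml sum_ind cCJ // => H.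
have : (a + e) * 2 ^+ (k - t) = a * 2 ^+ (k - t) by rewrite mulrC H aE.
move/mulIf; rewrite expf_neq0 ?pnatr_eq0 // => /(_ isT) /eqP.
rewrite -subr_eq0 addrC addKr => /eqP e00.
by move: e0; rewrite e00 ltxx.
Qed.
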